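(* Let $\pi=\sigma[\alpha_1,\dots,\alpha_m]$ be an involution, where $\sigma$ is a simple permutation of length $m\ge 4$ and $\alpha_1,\dots,\alpha_m$ are nonempty permutations. Then $\sigma$ is an involution and $\alpha_i=\alpha_{\sigma(i)}^{-1}$ for all $i\in[m]$.
   Context: An interval of $\pi\in S_n$ is a set of contiguous indices $[a,b]$ whose image under $\pi$ is a set of consecutive integers; $\pi$ is simple if its only intervals have size $0$, $1$, or $n$. For $\sigma\in S_m$ and nonempty permutations $\alpha_1,\dots,\alpha_m$, the inflation $\sigma[\alpha_1,\dots,\alpha_m]$ is the permutation obtained by replacing each entry $\sigma(i)$ by an interval (contiguous positions, consecutive values) order-isomorphic to $\alpha_i$. An involution is a permutation equal to its own inverse. *)

(* Defs.v *)
(* Permutations of [n] are 'S_n = {perm 'I_n} (0-based). *)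
From mathcomp Require Import all_boot all_order all_fingroup.
Set Implicit Arguments. Unset Strict Implicit. Unset Printing Implicit Defensive.

Definition contiguous n (A : {set 'I_n}) : Prop :=
  forall x y z : 'I_n, x \in A -> z \in A -> (x <= y <= z)%N -> y \in A.

Definition perm_interval n (s : 'S_n) (A : {set 'I_n}) : Prop :=
  contiguous A /\ contiguous (s @: A).

Definition simple_perm n (s : 'S_n) : Prop :=
  forall A : {set 'I_n}, perm_interval s A ->
    #|A| = 0 \/ #|A| = 1 \/ #|A| = n.

Definition involution n (s : 'S_n) : Prop := (s^-1)%g = s.

Definition natperm n (s : 'S_n) (p : nat) : nat :=
  if (insub p : option 'I_n) is Some o then val (s o) else p.

(* pi = sigma[alpha_1,...,alpha_m], alpha_i of size k i, pi of size N = sum k: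
   block i occupies positions pos_off i .. pos_off i + k i - 1 and
   values val_off i .. val_off i + k i - 1, in the pattern of alpha_i. *)
Definition pos_off m (k : 'I_m -> nat) (i : 'I_m) : nat :=
  \sum_(l < m | (l < i)%N) k l.
Definition val_off m (sigma : 'S_m) (k : 'I_m -> nat) (i : 'I_m) : nat :=
  \sum_(l < m | (sigma l < sigma i)%N) k l.

Definition is_inflation m (sigma : 'S_m) (k : 'I_m -> nat)
    (alpha : forall i : 'I_m, 'S_(k i)) N (pi : 'S_N) : Prop :=
  N = (\sum_(i < m) k i)%N /\
  forall (i : 'I_m) (j : 'I_(k i)),
    natperm pi (pos_off k i + j) = (val_off sigma k i + alpha i j)%N.

(* Main.v *)
Require Import Defs.
From mathcomp Require Import all_boot all_order all_fingroup.
From mathcomp Require Import zify.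
Set Implicit Arguments. Unset Strict Implicit. Unset Printing Implicit Defensive.

Lemma sum_lt m (k : 'I_m -> nat) (P Q : pred 'I_m) a :
  (forall l, P l -> Q l) -> Q a -> ~~ P a ->
  (\sum_(l | P l) k l + k a <= \sum_(l | Q l) k l)%N.
Proof.
move=> hPQ Qa nPa; rewrite (bigID P Q) /=.
rewrite (eq_bigl P); last first.
  by move=> l; case Pl: (P l); rewrite ?andbT ?andbF //= hPQ.
rewrite leq_add2l (bigD1 a) /=; last by rewrite Qa.
exact: leq_addr.
Qed.

Lemma mono_id m (g : 'I_m -> 'I_m) :
  (forall a b : 'I_m, (a < b)%N -> (g a < g b)%N) -> forall a, g a = a.
Proof.
move=> hg.
have up : forall n (a : 'I_m), (a : nat) = n -> (n <= g a)%N.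
  elim=> [//|n IH] a ha.
  have hn : (n < m)%N by have := ltn_ord a; lia.
  have := IH (Ordinal hn) erefl.
  have h1 : (Ordinal hn < a)%N by rewrite /= ha.
  have := hg _ _ h1. lia.
have down : forall d (a : 'I_m), (m - 1 - (a : nat) = d)%N -> (g a <= a)%N.
  elim=> [|d IH] a ha.
    have := ltn_ord (g a); have := ltn_ord a; lia.
  have hn : (a.+1 < m)%N by have := ltn_ord a; lia.
  have h2 : (m - 1 - Ordinal hn = d)%N by rewrite /=; lia.
  have := IH _ h2.
  have h1 : (a < Ordinal hn)%N by rewrite /=.
  have := hg _ _ h1. simpl. lia.
move=> a; apply: val_inj => /=.
have := up _ a erefl; have := down _ a erefl; lia.
Qed.

Lemma between m (k : 'I_m -> nat) (off ord : 'I_m -> nat) :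
  injective ord ->
  (forall a b, (ord a < ord b)%N -> (off a + k a <= off b)%N) ->
  (forall a, (0 < k a)%N) ->
  forall a b c xa xc lo hi,
  (ord a <= ord b <= ord c)%N ->
  (off a <= xa < off a + k a)%N -> (off c <= xc < off c + k c)%N ->
  (lo <= xa < hi)%N -> (lo <= xc < hi)%N ->
  exists y, (off b <= y < off b + k b)%N /\ (lo <= y < hi)%N.
Proof.
move=> inj mono kp a b c xa xc lo hi /andP[hab hbc] ha hc hla hlc.
case: (ltngtP (ord a) (ord b)) hab => // [lab|eab] _; last first.
  by rewrite (inj _ _ eab) in ha; exists xa.
case: (ltngtP (ord b) (ord c)) hbc => // [lbc|ebc] _; last first.
  by rewrite -(inj _ _ ebc) in hc; exists xc.
have := mono _ _ lab; have := mono _ _ lbc; have := kp b.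
exists (off b); lia.
Qed.

Lemma inside2 m (k : 'I_m -> nat) (off ord : 'I_m -> nat) :
  (forall a b, (ord a < ord b)%N -> (off a + k a <= off b)%N) ->
  forall a b c xa xc lo hi,
  (ord a < ord b < ord c)%N ->
  (off a <= xa < off a + k a)%N -> (off c <= xc < off c + k c)%N ->
  (lo <= xa < hi)%N -> (lo <= xc < hi)%N ->
  forall y, (off b <= y < off b + k b)%N -> (lo <= y < hi)%N.
Proof.
move=> mono a b c xa xc lo hi /andP[hab hbc] ha hc hla hlc y hy.
have := mono _ _ hab; have := mono _ _ hbc; lia.
Qed.

Lemma inside m (k : 'I_m -> nat) (off ord : 'I_m -> nat) :
  injective ord ->
  (forall a b, (ord a < ord b)%N -> (off a + k a <= off b)%N) ->
  (forall a, (0 < k a)%N) ->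
  forall a b c (S : nat -> Prop),
  (ord a <= ord b <= ord c)%N ->
  (forall x, (off a <= x < off a + k a)%N -> S x) ->
  (forall x, (off c <= x < off c + k c)%N -> S x) ->
  (forall x y z, S x -> S z -> (x <= y <= z)%N -> S y) ->
  forall y, (off b <= y < off b + k b)%N -> S y.
Proof.
move=> inj mono kp a b c S /andP[hab hbc] ha hc hS y hy.
case: (ltngtP (ord a) (ord b)) hab => // [lab|eab] _; last first.
  by rewrite (inj _ _ eab) in ha; apply: ha.
case: (ltngtP (ord b) (ord c)) hbc => // [lbc|ebc] _; last first.
  by rewrite -(inj _ _ ebc) in hc; apply: hc.
have h1 := mono _ _ lab; have h2 := mono _ _ lbc; have h3 := kp a; have h4 := kp c.
apply: (hS (off a) _ (off c + k c - 1)); [apply: ha|apply: hc|]; lia.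
Qed.

Lemma cover_nat (K : nat -> nat) n x :
  (x < \sum_(l < n) K l)%N ->
  exists l, (l < n)%N /\ (\sum_(i < l) K i <= x < \sum_(i < l) K i + K l)%N.
Proof.
elim: n => [|n IH]; first by rewrite big_ord0.
rewrite big_ord_recr /= => hx.
case: (ltnP x (\sum_(i < n) K i)) => h.
  by have [l [hl H]] := IH h; exists l; split => //; lia.
by exists n; split => //; apply/andP; split.
Qed.

Lemma card_full n (A : {set 'I_n}) : #|A| = n -> A = setT.
Proof.
move=> hA; apply/eqP; rewrite eqEcard subsetT /= hA.
by rewrite cardsT card_ord.
Qed.
Theorem proposition5p1 (m : nat) (sigma : 'S_m) (k : 'I_m -> nat)
    (alpha : forall i : 'I_m, 'S_(k i)) (N : nat) (pi : 'S_N) :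
  (4 <= m)%N -> simple_perm sigma -> (forall i, (0 < k i)%N) ->
  is_inflation sigma alpha pi -> involution pi ->
  involution sigma /\
  forall i : 'I_m, exists e : k i = k (sigma i),
    cast_perm e (alpha i) = ((alpha (sigma i))^-1)%g.
Proof.
move=> m4 simp kp [hN hinf] invpi.
set p := natperm pi.
set P := pos_off k. set V := val_off sigma k.
have pp : forall x, p (p x) = x.
  move=> x; rewrite /p /natperm.
  case: (ltnP x N) => hx.
    rewrite (insubT (fun x => x < N) hx) /= valK /=.
    have := permK pi (Ordinal hx); rewrite invpi => ->. done.
  by rewrite !insubF // ltnNge hx.
have pltN : forall x, (x < N)%N -> (p x < N)%N.
  move=> x hx; rewrite /p /natperm (insubT (fun x => x < N) hx) /=; exact: ltn_ord.
have posmono : forall a b : 'I_m, (a < b)%N -> (P a + k a <= P b)%N.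
  move=> a b ab; apply: (@sum_lt m k (fun l : 'I_m => (l < a)%N) (fun l : 'I_m => (l < b)%N)) => //.
    move=> l la; lia.
  by rewrite ltnn.
have valmono : forall a b : 'I_m, (sigma a < sigma b)%N -> (V a + k a <= V b)%N.
  move=> a b ab; apply: (@sum_lt m k (fun l : 'I_m => (sigma l < sigma a)%N) (fun l : 'I_m => (sigma l < sigma b)%N)) => //.
    move=> l la; lia.
  by rewrite ltnn.
have posN : forall a : 'I_m, (P a + k a <= N)%N.
  move=> a; rewrite hN; apply: (@sum_lt m k (fun l : 'I_m => (l < a)%N) predT) => //.
  by rewrite ltnn.
have valN : forall a : 'I_m, (V a + k a <= N)%N.
  move=> a; rewrite hN; apply: (@sum_lt m k (fun l : 'I_m => (sigma l < sigma a)%N) predT) => //.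
  by rewrite ltnn.
pose inP := fun (i : 'I_m) x => (P i <= x < P i + k i)%N.
pose inV := fun (i : 'I_m) x => (V i <= x < V i + k i)%N.
have PV : forall i x, inP i x -> inV i (p x).
  move=> i x /andP[h1 h2]; have hj : (x - P i < k i)%N by lia.
  have := hinf i (Ordinal hj); rewrite /= subnKC // => hx.
  rewrite /inV /p /V hx; have := ltn_ord (alpha i (Ordinal hj)). lia.
have cover : forall x, (x < N)%N -> exists j, inP j x.
  pose K := fun l => if (insub l : option 'I_m) is Some o then k o else 0%N.
  have KE : forall o : 'I_m, K o = k o by move=> o; rewrite /K valK.
  move=> x; rewrite hN (eq_bigr (fun i : 'I_m => K i)); last by move=> i _; rewrite KE.
  move=> /cover_nat [l [hl]]; rewrite (big_ord_widen m K (ltnW hl)).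
  rewrite (eq_bigr (fun i : 'I_m => k i)); last by move=> i _; rewrite KE.
  have -> : K l = k (Ordinal hl) by rewrite -KE.
  by move=> H; exists (Ordinal hl).
have Puniq : forall a b x, inP a x -> inP b x -> a = b.
  move=> a b x ha hb; apply: val_inj; move: ha hb; rewrite /inP.
  case: (ltngtP (val a) (val b)) => // hab.
    have := posmono _ _ hab; lia.
  have := posmono _ _ hab; lia.
have Vuniq : forall a b x, inV a x -> inV b x -> a = b.
  move=> a b x ha hb; apply: (@perm_inj _ sigma); apply: val_inj; move: ha hb; rewrite /inV.
  case: (ltngtP (val (sigma a)) (val (sigma b))) => // hab.
    have := valmono _ _ hab; lia.
  have := valmono _ _ hab; lia.
have VP : forall i y, inV i y -> inP i (p y).
  move=> i y hy.
  have yN : (y < N)%N by move: hy; rewrite /inV; have := valN i; lia.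
  have [j hj] := cover _ (pltN _ yN).
  have := PV _ _ hj; rewrite pp => /(Vuniq _ _ _ hy) ->; exact: hj.
have inVN : forall i x, inV i x -> (x < N)%N.
  move=> i x; rewrite /inV; have := valN i; lia.
have inPN : forall i x, inP i x -> (x < N)%N.
  move=> i x; rewrite /inP; have := posN i; lia.
have inPs : forall i, inP i (P i) by move=> i; rewrite /inP; have := kp i; lia.
have inVs : forall i, inV i (V i) by move=> i; rewrite /inV; have := kp i; lia.
have sinj : injective (fun a : 'I_m => nat_of_ord (sigma a)).
  by move=> u v /val_inj /perm_inj.
have key : forall i, exists j, forall x, inV i x -> inP j x.
  move=> i.
  pose J := [set j : 'I_m | [exists x : 'I_N, inV i x && inP j x]].
  pose F := [set j : 'I_m | [forall x : 'I_N, inP j x ==> inV i x]].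
  have Jin : forall j x, inV i x -> inP j x -> j \in J.
    move=> j x hv hp; rewrite inE; apply/existsP; exists (Ordinal (inVN _ _ hv)).
    by rewrite /= hv hp.
  have Jout : forall j, j \in J -> exists x, inV i x /\ inP j x.
    by move=> j; rewrite inE => /existsP [x /andP[]]; exists x.
  have Fin : forall j, (forall x, inP j x -> inV i x) -> j \in F.
    by move=> j H; rewrite inE; apply/forallP => x; apply/implyP; apply: H.
  have Fout : forall j, j \in F -> forall x, inP j x -> inV i x.
    move=> j hj x hx; move: hj; rewrite inE => /forallP /(_ (Ordinal (inPN _ _ hx))) /implyP.
    by apply.
  have Jint : perm_interval sigma J.
    split.
      move=> a b c ha hc hb.
      have [xa [va pa]] := Jout _ ha; have [xc [vc pc]] := Jout _ hc.
      have [y [py vy]] := @between m k P (@nat_of_ord m) val_inj posmono kp a b c xa xc (V i) (V i + k i) hb pa pc va vc.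
      exact: Jin vy py.
    move=> a' b' c' /imsetP[a ha ->] /imsetP[c hc ->] hb.
    rewrite -(permKV sigma b'); apply: imset_f.
    have hb' : (sigma a <= sigma ((sigma^-1)%g b') <= sigma c)%N by rewrite permKV.
    have [xa [va pa]] := Jout _ ha; have [xc [vc pc]] := Jout _ hc.
    have [y [vby piy]] := @between m k V (fun a => nat_of_ord (sigma a)) sinj valmono kp a _ c (p xa) (p xc) (P i) (P i + k i) hb' (PV _ _ pa) (PV _ _ pc) (VP _ _ va) (VP _ _ vc).
    exact: Jin (PV _ _ piy) (VP _ _ vby).
  have Fint : perm_interval sigma F.
    have hS : forall x y z, inV i x -> inV i z -> (x <= y <= z)%N -> inV i y.
      by move=> x y z; rewrite /inV; lia.
    have hS' : forall x y z, inP i x -> inP i z -> (x <= y <= z)%N -> inP i y.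
      by move=> x y z; rewrite /inP; lia.
    split.
      move=> a b c ha hc hb; apply: Fin.
      exact: (@inside m k P (@nat_of_ord m) val_inj posmono kp a b c (inV i) hb (Fout _ ha) (Fout _ hc) hS).
    move=> a' b' c' /imsetP[a ha ->] /imsetP[c hc ->] hb.
    rewrite -(permKV sigma b'); apply: imset_f.
    have hb' : (sigma a <= sigma ((sigma^-1)%g b') <= sigma c)%N by rewrite permKV.
    have sub : forall a, a \in F -> forall y, inV a y -> inP i y.
      move=> a0 ha0 y hy; rewrite -(pp y); apply: (VP); apply: (Fout _ ha0); exact: (VP).
    apply: Fin => x hx; rewrite -(pp x); apply: (PV).
    exact: (@inside m k V (fun a => nat_of_ord (sigma a)) sinj valmono kp a _ c (inP i) hb' (sub _ ha) (sub _ hc) hS' _ (PV _ _ hx)).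
  have m0 : (0 < m)%N by lia.
  have m1 : (1 < m)%N by lia.
  have m2 : (2 < m)%N by lia.
  have mL : (m.-1 < m)%N by lia.
  pose o0 := Ordinal m0; pose o1 := Ordinal m1; pose o2 := Ordinal m2; pose oL := Ordinal mL.
  case: (simp J Jint) => [J0|[J1|Jm]].
  - have [j hj] := cover _ (inVN _ _ (inVs i)).
    have := Jin _ _ (inVs i) hj; by rewrite (cards0_eq J0) inE.
  - move/eqP/cards1P: J1 => [j0 hJ0]; exists j0 => x hx.
    have [j hj] := cover _ (inVN _ _ hx).
    have := Jin _ _ hx hj; rewrite hJ0 => /set1P <-; exact: hj.
  - have JT : J = setT by apply: card_full.
    have [x0 [v0 p0]] : exists x, inV i x /\ inP o0 x by apply: Jout; rewrite JT inE.
    have [xL [vL pL]] : exists x, inV i x /\ inP oL x by apply: Jout; rewrite JT inE.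
    have inF : forall b : 'I_m, (0 < b < m.-1)%N -> b \in F.
      move=> b hb; apply: Fin => y hy.
      exact: (@inside2 m k P (@nat_of_ord m) posmono o0 b oL x0 xL (V i) (V i + k i) hb p0 pL v0 vL y hy).
    have F2 : (2 <= #|F|)%N.
      have -> : 2%N = #|[set o1; o2]| by rewrite cards2.
      apply: subset_leq_card; apply/subsetP => y /set2P [->|->]; apply: inF => /=; lia.
    have FT : F = setT.
      case: (simp F Fint) => [|[|]] hF; [by rewrite hF in F2|by rewrite hF in F2|].
      exact: card_full.
    exfalso.
    pose j := if i == o0 then o1 else o0.
    have ji : j != i by rewrite /j; case: ifP => [/eqP ->|/negbT]; [apply/eqP => /(congr1 val) | rewrite eq_sym].
    have hjin : forall x, inP j x -> inV i x by apply: Fout; rewrite FT inE.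
    have hiin : forall x, inP i x -> inV i x by apply: Fout; rewrite FT inE.
    have a1 := hjin _ (inPs j). have a2 := hiin _ (inPs i).
    have b1 : inV i (P j + k j - 1) by apply: hjin; rewrite /inP; have := kp j; lia.
    have b2 : inV i (P i + k i - 1) by apply: hiin; rewrite /inP; have := kp i; lia.
    move: a1 a2 b1 b2; rewrite /inV.
    have := kp i; have := kp j.
    case: (ltngtP (nat_of_ord i) (nat_of_ord j)) => hij.
    + have := posmono _ _ hij; lia.
    + have := posmono _ _ hij; lia.
    + by move: ji; rewrite (val_inj hij) eqxx.
have key' : forall i, exists j, [forall x : 'I_N, inV i x ==> inP j x].
  move=> i; have [j hj] := key i; exists j; apply/forallP => x; apply/implyP; exact: hj.
pose f := fun i => xchoose (key' i).
have fP : forall i x, inV i x -> inP (f i) x.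
  move=> i x hx; have := xchooseP (key' i) => /forallP /(_ (Ordinal (inVN _ _ hx))) /implyP.
  by apply.
have ff : forall i, f (f i) = i.
  move=> i; have h := inPs i.
  have h2 := fP _ _ (PV _ _ (fP _ _ (PV _ _ h))); rewrite pp in h2.
  exact: Puniq h2 h.
have fmono : forall a b, (sigma a < sigma b)%N -> (f a < f b)%N.
  move=> a b hab.
  have h1 := fP a _ (inVs a); have h2 := fP b _ (inVs b); have hv := valmono _ _ hab.
  move: h1 h2; rewrite /inP.
  case: (ltngtP (nat_of_ord (f a)) (nat_of_ord (f b))) => // hf.
    have := posmono _ _ hf; lia.
  have e : a = b by rewrite -(ff a) -(ff b) (val_inj hf).
  by move: hab; rewrite e ltnn.
have fsig : forall a, f a = sigma a.
  move=> a.
  have := @mono_id m (fun c => f ((sigma^-1)%g c)) _ (sigma a).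
  rewrite /= permK; apply.
  by move=> c d hcd; apply: fmono; rewrite !permKV.
have ss : forall a, sigma (sigma a) = a by move=> a; rewrite -!fsig ff.
have invs : involution sigma.
  by apply/permP => a; rewrite -{1}(ss a) permK.
split => //.
have le : forall i, (k i <= k (sigma i))%N /\ (P (sigma i) <= V i)%N.
  move=> i; have h1 := fP i _ (inVs i).
  have h2 : inP (f i) (V i + k i - 1) by apply: fP; rewrite /inV; have := kp i; lia.
  move: h1 h2; rewrite fsig /inP; lia.
have kk : forall i, k i = k (sigma i).
  move=> i; have := le i; have := le (sigma i); rewrite ss; lia.
have Vi : forall i, V i = P (sigma i).
  move=> i; have := le i; have := le (sigma i); rewrite ss.
  have h2 : inP (f i) (V i + k i - 1) by apply: fP; rewrite /inV; have := kp i; lia.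
  move: h2; rewrite fsig /inP; have := kk i; lia.
move=> i; exists (kk i).
apply/permP => y; rewrite cast_permE.
apply: (@perm_inj _ (alpha (sigma i))); rewrite permKV; apply: val_inj => /=.
set j := cast_ord (esym (kk i)) y.
set j' := cast_ord (kk i) (alpha i j).
have hj' : nat_of_ord j' = alpha i j by [].
have h1 := hinf i j. have h2 := hinf (sigma i) j'.
have h3 := pp (P i + j).
rewrite -/P -/V -/p in h1 h2.
rewrite h1 (Vi i) -hj' h2 (Vi (sigma i)) ss in h3.
have : nat_of_ord j = y by [].
lia.
Qed.
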